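(* Let $n=4h$ with $h$ odd, let $D_n=\langle x,y\mid x^n=y^2=1,\ yxy^{-1}=x^{-1}\rangle$, and let $G=D_n\rtimes\langle\beta_2\rangle$ with $\langle \beta_2\rangle\cong\mathbb Z/2$, where conjugation by $\beta_2$ acts by $y\mapsto yx^2$, $x\mapsto x^{2h-1}$; let $H=D_n\times\{0\}$ (index 2 in $G$). Then for none of the cover types I, II, III-a, III-b does there exist an admissible homomorphism $f:T(m_1,\dots,m_r)\to G$.
   Context: For integers $m_1,\dots,m_r\ge 2$, $T(m_1,\dots,m_r):=\langle\gamma_1,\dots,\gamma_r\mid \gamma_1\cdots\gamma_r=1,\ \gamma_i^{m_i}=1\rangle$. Let $f_H:=\pi_H\circ f$, where $\pi_H:G\to G/H\cong\mathbb Z/2$ is the quotient map. A homomorphism $f:T(m_1,\dots,m_r)\to G$ is admissible for a given cover type if $f$ is surjective, $f(\gamma_i)$ has order exactly $m_i$, and: Cover type I: $r=6$, $(m_i)=(2,\dots,2)$, $f_H(\gamma_i)\ne 0$ for all $i$. Cover type II: $r=5$, $(m_i)=(2,2,2,2,c_5)$, $f_H(\gamma_i)\ne0$ for $i\le4$, $f_H(\gamma_5)=0$. Cover type III-a: $r=4$, $(m_i)=(2,2,2,2d_4)$ with $d_4>1$, $f_H(\gamma_i)\ne 0$ for all $i$. Cover type III-b: $r=4$, $(m_i)=(2,2,c_3,c_4)$ with $c_3\le c_4$, $c_4>2$, $f_H(\gamma_1),f_H(\gamma_2)\ne0$, $f_H(\gamma_3)=f_H(\gamma_4)=0$. *)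

(* Defs.v *)
From HB Require Import structures.
From mathcomp Require Import all_boot all_order all_algebra all_fingroup.
From mathcomp Require Import ring.
Set Implicit Arguments. Unset Strict Implicit. Unset Printing Implicit Defensive.
Import GRing.Theory.

(* An element of D_n is encoded as (a, b) : 'Z_n * bool, standing for x^a y^b *)
(* (with y x^a = x^-a y).  An element of G is encoded as (d, c), standing     *)
(* for d * beta_2^c.  Conjugation by beta_2 is the automorphism sigma of D_n  *)
(* with sigma x = x^(2h-1), sigma y = y x^2 = x^-2 y, i.e.                    *)
(*     sigma (x^a y^b) = x^(u a - 2 b) y^b,   u = 2h - 1.                     *)

Section Dihedral.
Variable h : nat.
Local Notation Zn := 'Z_(4 * h).
Local Open Scope ring_scope.

Definition Dn := (Zn * bool)%type.

(* dihedral multiplication: x^a1 y^b1 x^a2 y^b2 = x^(a1 +- a2) y^(b1+b2) *)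
Definition dmul (p q : Dn) : Dn :=
  (p.1 + (if p.2 then - q.1 else q.1), p.2 (+) q.2).
Definition dinv (p : Dn) : Dn := (if p.2 then p.1 else - p.1, p.2).
Definition d1 : Dn := (0, false).

Definition uu : Zn := (2 * h)%:R - 1.
Definition sigma (p : Dn) : Dn := (uu * p.1 - (2 * p.2)%:R, p.2).
Definition sig (c : bool) (p : Dn) : Dn := if c then sigma p else p.

Lemma four_h0 : (4 * h)%:R = 0 :> Zn.
Proof.
case: h => [|k]; first by rewrite muln0.
by apply: pchar_Zp; rewrite mulnS.
Qed.

Lemma uu_sq : uu * uu = 1.
Proof.
have E : 4 * (h%:R : Zn) = 0 by rewrite -four_h0 natrM.
rewrite /uu natrM.
transitivity (4 * (h%:R : Zn) * (h%:R - 1) + 1); first ring.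
by rewrite E mul0r add0r.
Qed.

Lemma uu2 : uu * 2 = -2.
Proof.
have E : 4 * (h%:R : Zn) = 0 by rewrite -four_h0 natrM.
rewrite /uu natrM.
transitivity (4 * (h%:R : Zn) - 2); first ring.
by rewrite E sub0r.
Qed.

Lemma dmulA : associative dmul.
Proof.
move=> [a1 b1] [a2 b2] [a3 b3]; rewrite /dmul /=.
by case: b1; case: b2; case: b3 => /=; congr (_, _); ring.
Qed.

Lemma dmul1 : left_id d1 dmul.
Proof. by move=> [a b]; rewrite /dmul /= add0r. Qed.

Lemma dmulV : left_inverse d1 dinv dmul.
Proof.
by move=> [a b]; rewrite /dmul /dinv /=; case: b => /=;
  rewrite ?addrN ?addNr ?addbb.
Qed.

Lemma sigmaM p q : sigma (dmul p q) = dmul (sigma p) (sigma q).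
Proof.
case: p q => [a1 b1] [a2 b2]; rewrite /sigma /dmul /=.
by case: b1; case: b2 => /=; congr (_, _); ring.
Qed.

Lemma sigmaK p : sigma (sigma p) = p.
Proof.
case: p => [a b]; rewrite /sigma /=; congr (_, _).
case: b => /=.
  rewrite muln1 mulrBr mulrA uu_sq mul1r uu2; ring.
by rewrite muln0 subr0 subr0 mulrA uu_sq mul1r.
Qed.

Lemma sig1 c : sig c d1 = d1.
Proof. by case: c; rewrite //= /sigma /d1 /= mulr0 subr0. Qed.

Lemma sigM c p q : sig c (dmul p q) = dmul (sig c p) (sig c q).
Proof. by case: c => //=; apply: sigmaM. Qed.

Lemma sigD c1 c2 p : sig (c1 (+) c2) p = sig c1 (sig c2 p).
Proof. by case: c1; case: c2 => //=; rewrite sigmaK. Qed.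

End Dihedral.

Record Gsd (h : nat) := MkG { gD : Dn h ; gc : bool }.

Definition Gsd_to h (g : Gsd h) : Dn h * bool := (gD g, gc g).
Definition Gsd_of h (p : Dn h * bool) : Gsd h := MkG p.1 p.2.
Lemma Gsd_toK h : cancel (@Gsd_to h) (@Gsd_of h).
Proof. by case. Qed.

HB.instance Definition _ h := Finite.copy (Gsd h) (can_type (@Gsd_toK h)).

Section Group.
Variable h : nat.

(* (d1 beta^c1) (d2 beta^c2) = d1 sigma^c1(d2) beta^(c1+c2) *)
Definition gmul (g k : Gsd h) : Gsd h :=
  MkG (dmul (gD g) (sig (gc g) (gD k))) (gc g (+) gc k).
Definition gone : Gsd h := MkG (d1 h) false.
Definition ginv (g : Gsd h) : Gsd h := MkG (sig (gc g) (dinv (gD g))) (gc g).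

Lemma gmulA : associative gmul.
Proof.
move=> [p1 c1] [p2 c2] [p3 c3]; rewrite /gmul /=.
by rewrite addbA sigM dmulA sigD.
Qed.

Lemma gmul1 : left_id gone gmul.
Proof. by move=> [p c]; rewrite /gmul /= dmul1. Qed.

Lemma gmulV : left_inverse gone ginv gmul.
Proof.
by move=> [p c]; rewrite /gmul /ginv /= -sigM dmulV sig1 addbb.
Qed.

HB.instance Definition _ := Finite_isGroup.Build (Gsd h) gmulA gmul1 gmulV.

End Group.

(* f_H(g) <> 0 iff g \notin H_sd h.                                           *)
Definition H_sd (h : nat) : {set Gsd h} := [set g | ~~ gc g].

Definition x_sd h : Gsd h := MkG (1%R, false) false.
Definition y_sd h : Gsd h := MkG (0%R, true) false.
Definition beta_sd h : Gsd h := MkG (0%R, false) true.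

(* A homomorphism f : T(m_1,...,m_r) -> G is given by the images           *)
(* gs = [:: f gamma_1; ...; f gamma_r] (the universal property of the       *)
(* presentation).  It is admissible (apart from the cover-type conditions)  *)
(* iff: the relations gamma_1...gamma_r = 1 hold (gamma_i^m_i = 1 follows   *)
(* from the order condition), f is surjective (the images generate G), and  *)
(* f(gamma_i) has order exactly m_i.                                        *)
Definition admissible_hom (gT : finGroupType) (gs : seq gT) (ms : seq nat) :
  Prop :=
  [/\ size gs = size ms,
      all (fun m => 1 < m) ms,
      (\prod_(g <- gs) g)%g = 1%g,
      <<[set g in gs]>>%g = [set: gT]
    & forall i, i < size gs -> #[nth 1%g gs i]%g = nth 0 ms i].

(* Main.v *)
Require Import Defs.
From HB Require Import structures.
From mathcomp Require Import all_boot all_order all_algebra all_fingroup.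
Import GRing.Theory.
Set Implicit Arguments. Unset Strict Implicit.

Section S.
Variable h : nat.
Hypothesis h_odd : odd h.
Local Open Scope ring_scope.

Lemma hgt1 : (1 < 4 * h)%N.
Proof. by case: h h_odd => // k _; rewrite mulnS. Qed.

Definition phi (a : 'Z_(4 * h)) : 'Z_4 := (nat_of_ord a)%:R.

Lemma phi_nat n : phi (n%:R) = n%:R.
Proof.
rewrite /phi val_Zp_nat ?hgt1 //.
apply: val_inj; rewrite /= !val_Zp_nat //.
by rewrite -(modn_dvdm n (dvdn_mulr h (dvdnn 4))).
Qed.

Lemma phiD a b : phi (a + b) = phi a + phi b.
Proof. by rewrite -[a]natr_Zp -[b]natr_Zp -natrD !phi_nat natrD. Qed.
Lemma phiM a b : phi (a * b) = phi a * phi b.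
Proof. by rewrite -[a]natr_Zp -[b]natr_Zp -natrM !phi_nat natrM. Qed.
Lemma phi0 : phi 0 = 0.
Proof. by rewrite -(mulr0n 1) phi_nat. Qed.
Lemma phi1 : phi 1 = 1.
Proof. by rewrite -(mulr1n 1) phi_nat. Qed.
Lemma phiN a : phi (- a) = - phi a.
Proof. by apply/eqP; rewrite -subr_eq0 opprK -phiD addNr phi0. Qed.
Lemma phiB a b : phi (a - b) = phi a - phi b.
Proof. by rewrite phiD phiN. Qed.

Lemma two_h : ((2 * h)%:R : 'Z_4) = 2.
Proof.
rewrite -[h](odd_double_half) h_odd -addnn.
rewrite !natrM !natrD.
have -> : (h./2%:R : 'Z_4) + h./2%:R = 2 * h./2%:R by rewrite mulr2n mulrDl mul1r.
have E : (2 * 2 : 'Z_4) = 0 by apply/eqP.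
rewrite mulrDr mulrA E mul0r addr0; by apply/eqP.
Qed.

Definition par (a : 'Z_(4 * h)) : bool := odd (nat_of_ord (phi a)).

Ltac z4 := let n := fresh in let H := fresh in
  case=> [[|[|[|[|n]]]] H]; [..|by []].

Lemma Z4D (z w : 'Z_4) : odd (nat_of_ord (z + w)) = odd z (+) odd w.
Proof. by move: z w; z4; z4. Qed.
Lemma Z4N (z : 'Z_4) : odd (nat_of_ord (- z)) = odd z.
Proof. by move: z; z4. Qed.
Lemma Z4s (z : 'Z_4) : odd (nat_of_ord (z - 2)) = odd z.
Proof. by move: z; z4. Qed.
Lemma Z4i1 (z : 'Z_4) : z - (1 * z - 2) != 0.
Proof. by move: z; z4. Qed.
Lemma Z4i2 (z : 'Z_4) : z + (1 * z - 0) = 0 -> ~~ odd z.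
Proof. by move: z; z4. Qed.

Lemma parD a b : par (a + b) = par a (+) par b.
Proof. by rewrite /par phiD Z4D. Qed.
Lemma parN a : par (- a) = par a.
Proof. by rewrite /par phiN Z4N. Qed.

Lemma phi_uu : phi (uu h) = 1.
Proof. by rewrite /uu phiB phi_nat phi1 two_h; apply/eqP. Qed.

Lemma phi_sigma (d : Dn h) :
  phi (sigma d).1 = 1 * phi d.1 - (2 * d.2)%:R.
Proof. by rewrite /sigma /= phiB phiM phi_uu phi_nat. Qed.

Lemma par_sig c (d : Dn h) : par (sig c d).1 = par d.1 /\ (sig c d).2 = d.2.
Proof.
case: c => //=; split => //.
rewrite /par phi_sigma mul1r; case: (d.2).
  by rewrite (_ : (2 * true)%N = 2) // Z4s.
by rewrite (_ : (2 * false)%N = 0) // subr0.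
Qed.

Definition lam (s t : bool) (g : Gsd h) : bool :=
  (s && par (gD g).1) (+) (t && (gD g).2).

Lemma lamM s t g k : lam s t (g * k)%g = lam s t g (+) lam s t k.
Proof.
case: g k => [[a1 b1] c1] [d2 c2].
rewrite /lam /=.
have [P E] := par_sig c1 d2.
rewrite /dmul /=.
rewrite parD E; case: b1; rewrite /= ?parN P;
  by case: s t (par a1) (par d2.1) d2.2 => [] [] [] [] [].
Qed.

Lemma lam1 s t : lam s t 1%g = false.
Proof.
by rewrite /lam /par /= !andbF.
Qed.

Lemma invol (g : Gsd h) s t : gc g -> (g * g)%g = 1%g -> lam s t g = false.
Proof.
case: g => [[a b] c] /= -> E.
have := congr1 (@gD h) E; rewrite /= /dmul /= => E2.
have := congr1 fst E2; rewrite /= => E1.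
have := congr1 phi E1; rewrite phi0 phiD.
clear E E2; case: b E1 => _.
  rewrite phiN phiB phiM phi_uu phi_nat (_ : (2 * true)%N = 2) // => /eqP.
  by rewrite (negbTE (Z4i1 _)).
rewrite phiB phiM phi_uu phi_nat (_ : (2 * false)%N = 0) // mulr0n => /Z4i2 H.
by rewrite /lam /par /= (negbTE H) !andbF.
Qed.
End S.

Lemma inv2 h (g : Gsd h) : #[g]%g = 2 -> (g * g = 1)%g.
Proof. by move=> o; rewrite -(expg_order g) o expgS expg1. Qed.

Lemma gen_notT h (ho : odd h) s t (gs : seq (Gsd h)) :
  s || t -> all (fun g => ~~ lam s t g) gs -> <<[set g in gs]>>%g != [set: Gsd h].
Proof.
move=> st Hall; apply/negP => /eqP E.
have Kg : group_set [set g : Gsd h | ~~ lam s t g].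
  apply/group_setP; split; first by rewrite inE lam1.
  by move=> x y; rewrite !inE (lamM ho) => /negbTE -> /negbTE ->.
have sub : (<<[set g in gs]>> \subset Group Kg)%g.
  rewrite gen_subG; apply/subsetP => x; rewrite !inE => /(allP Hall).
  by [].
rewrite E in sub; clear Hall E.
have W := subsetP sub (if s then x_sd h else y_sd h) (in_setT _).
move: W; rewrite inE; clear sub Kg; rewrite /lam /par.
case: s st => /=; first by rewrite andbF.
by move=> ->.
Qed.

Lemma LI h (ho : odd h) (g : Gsd h) s t : g \notin H_sd h -> #[g]%g = 2 -> lam s t g = false.
Proof. by rewrite inE negbK => c o; apply: (invol ho) => //; apply: inv2. Qed.

Lemma choose_ok p b : ((~~ p || b) && p) (+) (p && b) = false.
Proof. by case: p; case: b. Qed.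

Theorem lemma5p8 (h : nat) (h_odd : odd h) :
  (* Cover type I *)
  (~ exists g1 g2 g3 g4 g5 g6 : Gsd h,
       admissible_hom [:: g1; g2; g3; g4; g5; g6] [:: 2; 2; 2; 2; 2; 2]
       /\ all (fun g => g \notin H_sd h) [:: g1; g2; g3; g4; g5; g6]) /\
  (* Cover type II *)
  (~ exists (g1 g2 g3 g4 g5 : Gsd h) (c5 : nat),
       admissible_hom [:: g1; g2; g3; g4; g5] [:: 2; 2; 2; 2; c5]
       /\ all (fun g => g \notin H_sd h) [:: g1; g2; g3; g4]
       /\ g5 \in H_sd h) /\
  (* Cover type III-a *)
  (~ exists (g1 g2 g3 g4 : Gsd h) (d4 : nat),
       1 < d4
       /\ admissible_hom [:: g1; g2; g3; g4] [:: 2; 2; 2; 2 * d4]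
       /\ all (fun g => g \notin H_sd h) [:: g1; g2; g3; g4]) /\
  (* Cover type III-b *)
  (~ exists (g1 g2 g3 g4 : Gsd h) (c3 c4 : nat),
       c3 <= c4 /\ 2 < c4
       /\ admissible_hom [:: g1; g2; g3; g4] [:: 2; 2; c3; c4]
       /\ g1 \notin H_sd h /\ g2 \notin H_sd h
       /\ g3 \in H_sd h /\ g4 \in H_sd h).
Proof.
split; [|split; [|split]].
- case=> g1 [g2 [g3 [g4 [g5 [g6 [[_ _ Hp Hg Ho] Hn]]]]]].
  move: Hn => /= /andP[c1 /andP[c2 /andP[c3 /andP[c4 /andP[c5 /andP[c6 _]]]]]].
  move/eqP: Hg; apply/negP; apply: (gen_notT h_odd (s:=true) (t:=false)) => //=.
  by rewrite (LI h_odd true false c1 (Ho 0 isT)) (LI h_odd true false c2 (Ho 1 isT)) (LI h_odd true false c3 (Ho 2 isT))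
    (LI h_odd true false c4 (Ho 3 isT)) (LI h_odd true false c5 (Ho 4 isT)) (LI h_odd true false c6 (Ho 5 isT)).
- case=> g1 [g2 [g3 [g4 [g5 [c5' [[_ _ Hp Hg Ho] [Hn _]]]]]]].
  move: Hn => /= /andP[c1 /andP[c2 /andP[c3 /andP[c4 _]]]].
  have L1 := LI h_odd true false c1 (Ho 0 isT).
  have L2 := LI h_odd true false c2 (Ho 1 isT).
  have L3 := LI h_odd true false c3 (Ho 2 isT).
  have L4 := LI h_odd true false c4 (Ho 3 isT).
  have := congr1 (lam true false) Hp.
  rewrite !big_cons big_nil mulg1 !(lamM h_odd) lam1 L1 L2 L3 L4 /= => L5.
  move/eqP: Hg; apply/negP; apply: (gen_notT h_odd (s:=true) (t:=false)) => //=.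
  by rewrite L1 L2 L3 L4 L5.
- case=> g1 [g2 [g3 [g4 [d4 [_ [[_ _ Hp Hg Ho] Hn]]]]]].
  move: Hn => /= /andP[c1 /andP[c2 /andP[c3 _]]].
  have L1 := LI h_odd true false c1 (Ho 0 isT).
  have L2 := LI h_odd true false c2 (Ho 1 isT).
  have L3 := LI h_odd true false c3 (Ho 2 isT).
  have := congr1 (lam true false) Hp.
  rewrite !big_cons big_nil mulg1 !(lamM h_odd) lam1 L1 L2 L3 /= => L4.
  move/eqP: Hg; apply/negP; apply: (gen_notT h_odd (s:=true) (t:=false)) => //=.
  by rewrite L1 L2 L3 L4.
- case=> g1 [g2 [g3 [g4 [c3' [c4' [_ [_ [[_ _ Hp Hg Ho] [c1 [c2 _]]]]]]]]]].
  pose s := ~~ par (gD g3).1 || (gD g3).2.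
  pose t := par (gD g3).1.
  have st : s || t by rewrite /s /t orbC orbA orbN.
  have L1 := LI h_odd s t c1 (Ho 0 isT).
  have L2 := LI h_odd s t c2 (Ho 1 isT).
  have L3 : lam s t g3 = false.
    exact: choose_ok.
  have := congr1 (lam s t) Hp.
  rewrite !big_cons big_nil mulg1 !(lamM h_odd) lam1 L1 L2 L3 /= => L4.
  move/eqP: Hg; apply/negP; apply: (gen_notT h_odd st) => //=.
  by rewrite L1 L2 L3 L4.
Qed.
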